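(* Let $X$ be a topological space, let $d\ge 1$, let $k=\operatorname{coind}_{\mathbb{Z}/2}(\mathrm{Conf}_2(X))$, and assume $k\ge d-1$. Then every injective function $f\colon X\to\mathbb{R}^d$ (not assumed continuous) satisfies $\alpha(f)\ge c_{d-1,k}$.
   Context: $\mathrm{Conf}_2(X)=\{(x,y)\in X\times X: x\neq y\}$ with the subspace topology and the $\mathbb{Z}/2$-action swapping coordinates. For a $\mathbb{Z}/2$-space $Z$, $\operatorname{coind}_{\mathbb{Z}/2}(Z)$ is the largest integer $k\ge0$ such that there is a continuous $\mathbb{Z}/2$-equivariant map $S^k\to Z$ ($S^k$ with the antipodal action). Spheres carry the geodesic metric $d(u,v)=\arccos\langle u,v\rangle$. For a topological space $X$ and a metric space $Y$, $\delta(g)=\inf\{\delta\ge 0 : \text{for every } x\in X \text{ there is an open neighborhood } U_x \text{ of } x \text{ with } \operatorname{diam}(g(U_x))\le\delta\}$. For injective $f\colon X\to\mathbb{R}^d$, $\Phi_f(x,y)=\frac{f(x)-f(y)}{\|f(x)-f(y)\|}\in S^{d-1}$ and $\alpha(f)=\delta(\Phi_f)$. For a metric space $Y$ and $r\ge0$, $\mathrm{VR}(Y;r)$ is the Vietoris–Rips complex (simplices: finite subsets of diameter $\le r$), geometrically realized. For $k\ge n\ge0$, $c_{n,k}=\inf\{r\ge0:\text{there is a continuous } \mathbb{Z}/2\text{-equivariant map } S^k\to\mathrm{VR}(S^n;r)\}$, with $\mathbb{Z}/2$ acting on $\mathrm{VR}(S^n;r)$ via the antipodal map on vertices. *)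

(* Defs.v *)
From HB Require Import structures.
From mathcomp Require Import all_boot all_order all_algebra.
From mathcomp Require Import all_classical all_reals all_analysis.
Set Implicit Arguments. Unset Strict Implicit. Unset Printing Implicit Defensive.
Import Order.TTheory GRing.Theory Num.Theory.
Import numFieldNormedType.Exports.
Local Open Scope classical_set_scope.
Local Open Scope ring_scope.

Section Defs.
Variable R : realType.

Definition dotp m (u v : 'rV[R]_m) : R := \sum_(i < m) u 0 i * v 0 i.
Definition enorm m (u : 'rV[R]_m) : R := Num.sqrt (dotp u u).

(* unit sphere S^(m-1) in R^m *)
Definition sphere m : set 'rV[R]_m := [set u | dotp u u = 1].
Arguments sphere : clear implicits.

Definition geod m (u v : 'rV[R]_m) : R := acos (dotp u v).

(* Conf_2(X) as a subset of X * X (carrying the subspace topology) *)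
Definition conf2 (X : topologicalType) : set (X * X) := [set p | p.1 <> p.2].
Arguments conf2 : clear implicits.

(* continuous Z/2-equivariant map S^k -> Conf_2(X) *)
Definition equiv_map_conf (X : topologicalType) (k : nat)
    (h : 'rV[R]_k.+1 -> X * X) : Prop :=
  {within sphere k.+1, continuous h} /\
  (forall u, sphere k.+1 u -> conf2 X (h u)) /\
  (forall u, sphere k.+1 u -> h (- u) = ((h u).2, (h u).1)).

Arguments equiv_map_conf : clear implicits.

(* coind_{Z/2}(Conf_2 X) = k : k is the largest such integer *)
Definition coind_conf_eq (X : topologicalType) (k : nat) : Prop :=
  (exists h, equiv_map_conf X k h) /\
  (forall m, (k < m)%N -> ~ exists h : 'rV[R]_m.+1 -> X * X, equiv_map_conf X m h).

(* delta(g) for g defined on the subspace D of a topological space T,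
   with values in a sphere with the geodesic metric:
   diam(g(U_x)) <= e, with U_x = V `&` D open neighbourhood of x in D *)
Definition delta_le (T : topologicalType) m (D : set T) (g : T -> 'rV[R]_m)
    (e : R) : Prop :=
  forall x, D x -> exists V : set T, open V /\ V x /\
    forall a b, D a -> D b -> V a -> V b -> geod (g a) (g b) <= e.

Definition delta_of (T : topologicalType) m (D : set T) (g : T -> 'rV[R]_m)
    : \bar R :=
  ereal_inf [set e%:E | e in [set e : R | 0 <= e /\ delta_le D g e]].

Definition Phi (X : topologicalType) d (f : X -> 'rV[R]_d) (p : X * X)
    : 'rV[R]_d :=
  (enorm (f p.1 - f p.2))^-1 *: (f p.1 - f p.2).

Definition alpha (X : topologicalType) d (f : X -> 'rV[R]_d) : \bar R :=
  delta_of (conf2 X) (Phi f).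

(* Vietoris--Rips complex VR(S^n; r): simplices are finite subsets
   (listed without repetition) of S^n of diameter <= r *)
Definition vr_simplex n (r : R) (s : seq 'rV[R]_n.+1) : Prop :=
  uniq s /\ (forall v, v \in s -> sphere n.+1 v) /\
  (forall v w, v \in s -> w \in s -> geod v w <= r).
Arguments vr_simplex : clear implicits.

(* points of the geometric realization: finitely supported convex
   combinations of vertices of a simplex *)
Definition vr_point n (r : R) (p : 'rV[R]_n.+1 -> R) : Prop :=
  exists s, vr_simplex n r s /\ (forall v, v \notin s -> p v = 0) /\
    (forall v, 0 <= p v) /\ \sum_(v <- s) p v = 1.
Arguments vr_point : clear implicits.

Definition std_simplex m (t : 'rV[R]_m) : Prop :=
  (forall i, 0 <= t 0 i) /\ \sum_(i < m) t 0 i = 1.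

Definition bary n (s : seq 'rV[R]_n.+1) (t : 'rV[R]_(size s))
    : 'rV[R]_n.+1 -> R :=
  fun v => \sum_(i < size s | nth 0 s i == v) t 0 i.
Arguments bary : clear implicits.

(* open sets of the geometric realization |VR(S^n; r)| (weak topology):
   W is open iff its preimage under every characteristic map of a closed
   simplex is (relatively) open in the standard simplex *)
Definition vr_open n (r : R) (W : set ('rV[R]_n.+1 -> R)) : Prop :=
  (W `<=` vr_point n r)%classic /\
  forall s, vr_simplex n r s -> forall t : 'rV[R]_(size s),
    std_simplex t -> W (bary n s t) ->
    \forall t' \near t, std_simplex t' -> W (bary n s t').
Arguments vr_open : clear implicits.

(* continuous Z/2-equivariant map S^k -> |VR(S^n; r)|, the Z/2 action on
   |VR| being induced by the antipodal map on vertices *)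
Definition vr_equiv_map n k (r : R) (g : 'rV[R]_k.+1 -> ('rV[R]_n.+1 -> R))
    : Prop :=
  (forall u, sphere k.+1 u -> vr_point n r (g u)) /\
  (forall W, vr_open n r W -> forall u, sphere k.+1 u -> W (g u) ->
     \forall u' \near u, sphere k.+1 u' -> W (g u')) /\
  (forall u, sphere k.+1 u -> g (- u) = (fun v => g u (- v))).

Arguments vr_equiv_map : clear implicits.

Definition c_nk n k : \bar R :=
  ereal_inf [set r%:E | r in [set r : R | 0 <= r /\ exists g, vr_equiv_map n k r g]].

Arguments c_nk : clear implicits.
Arguments coind_conf_eq : clear implicits.
End Defs.

(* Main.v *)
Require Import Defs.
From HB Require Import structures.
From mathcomp Require Import all_boot all_order all_algebra.
From mathcomp Require Import all_classical all_reals all_analysis.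
From mathcomp Require Import ring lra.
Import Order.TTheory GRing.Theory Num.Theory.
Import numFieldNormedType.Exports.
Section Helpers.
Local Open Scope classical_set_scope.
Local Open Scope ring_scope.

Lemma near_seq {T : Type} {I : eqType} (F : set_system T) {FF : Filter F}
  (s : seq I) (P : I -> T -> Prop) :
  (forall i, i \in s -> \forall x \near F, P i x) ->
  \forall x \near F, forall i, i \in s -> P i x.
Proof.
elim: s => [|a s IH] H; first by apply: nearW => x i.
have Ha := H a (mem_head _ _).
have Hs := IH (fun i hi => H i (ltac:(by rewrite in_cons hi orbT))).
apply: filterS2 Ha Hs => x Pa Ps i; rewrite in_cons => /orP[/eqP->|]//; exact: Ps.
Qed.

Lemma pos_min {R : realType} {I : eqType} (s : seq I) (F : I -> R) :
  (forall i, i \in s -> 0 < F i) -> exists2 r, 0 < r & forall i, i \in s -> r <= F i.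
Proof.
elim: s => [|a s IH] H; first by exists 1.
have [r r0 Hr] := IH (fun i hi => H i (ltac:(by rewrite in_cons hi orbT))).
exists (Num.min r (F a)); first by rewrite lt_min r0 H // mem_head.
move=> i; rewrite in_cons => /orP[/eqP->|hi]; first by rewrite ge_min lexx orbT.
by rewrite ge_min Hr.
Qed.

Lemma cvg_sumseq {R : realType} {T : Type} (F : set_system T) {FF : Filter F}
  {I : Type} (s : seq I) (P : pred I) (f : I -> T -> R) (a : I -> R) :
  (forall i, P i -> f i x @[x --> F] --> a i) ->
  (\sum_(i <- s | P i) f i x) @[x --> F] --> \sum_(i <- s | P i) a i.
Proof.
move=> H; elim: s => [|i s IH].
  rewrite big_nil; under eq_cvg do rewrite big_nil; exact: cvg_cst.
rewrite big_cons; under eq_cvg do rewrite big_cons.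
case: ifPn => Pi //; exact: cvgD (H _ Pi) IH.
Qed.

End Helpers.
Section Sph.
Local Open Scope classical_set_scope.
Local Open Scope ring_scope.
Variables (R : realType) (m : nat).

Lemma dotp_ge0 (u : 'rV[R]_m) : 0 <= dotp u u.
Proof. by apply: sumr_ge0 => i _; rewrite -expr2 sqr_ge0. Qed.

Lemma dotpN (u v : 'rV[R]_m) : dotp (- u) (- v) = dotp u v.
Proof. by apply: eq_bigr => i _; rewrite !mxE mulrNN. Qed.

Lemma sphereN (u : 'rV[R]_m) : sphere u -> sphere (- u).
Proof. by rewrite /sphere /= dotpN. Qed.

Lemma sphere_closed : closed (@sphere R m).
Proof.
have -> : @sphere R m = (fun u => dotp u u) @^-1` [set 1] by [].
apply: preimage_closed; last exact: closed_eq.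
move=> u _; rewrite /dotp; apply: (@cvg_sumseq R _ (nbhs u)) => i _.
by apply: cvgM; apply: coord_continuous.
Qed.

Lemma sphere_coord (u : 'rV[R]_m) i : sphere u -> `|u 0 i| <= 1.
Proof.
rewrite /sphere /= /dotp (bigD1 i) //= => H.
have : 0 <= \sum_(j < m | j != i) u 0 j * u 0 j.
  by apply: sumr_ge0 => j _; rewrite -expr2 sqr_ge0.
move=> H2; rewrite ler_norml; apply/andP; split; nra.
Qed.

Lemma sphere_compact : compact (@sphere R m).
Proof.
apply: bounded_closed_compact; last exact: sphere_closed.
exists 1; split; first by rewrite num_real.
move=> M M1 u Su /=.
have : ball (0 : 'rV[R]_m) M u.
  split; first lra.
  move=> i j; rewrite /ball /= mxE sub0r normrN (ord1 i).

  by apply: le_lt_trans M1; apply: sphere_coord.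
rewrite -ball_normE /= sub0r normrN => /ltW //.
Qed.
End Sph.
Section Main.
Local Open Scope classical_set_scope.
Local Open Scope ring_scope.
Variables (R : realType) (n k : nat) (e : R).
Variable G : 'rV[R]_k.+1 -> 'rV[R]_n.+1.
Hypothesis HGs : forall u, sphere u -> sphere (G u).
Hypothesis HGodd : forall u, sphere u -> G (- u) = - G u.
Hypothesis HGloc : forall x : 'rV[R]_k.+1, sphere x -> exists2 r, 0 < r &
  forall a b, sphere a -> sphere b -> `|x - a| < r -> `|x - b| < r ->
  geod (G a) (G b) <= e.

Lemma cover_fin (A : set 'rV[R]_k.+1) (r : 'rV[R]_k.+1 -> R) : compact A ->
  (forall x, A x -> 0 < r x) ->
  exists N : seq 'rV[R]_k.+1, (forall w, w \in N -> A w) /\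
    forall u, A u -> exists2 w, w \in N & `|w - u| < r w.
Proof.
rewrite compact_cover => cA rpos.
have op : forall x, A x -> open (ball x (r x)).
  by move=> x Ax; apply: ball_open; exact: rpos.
have cv : A `<=` cover A (fun x => ball x (r x)).
  by move=> u Au; exists u => //; apply: ballxx; exact: rpos.
have [D' D'A cov] := cA _ A _ op cv.
exists (finmap.enum_fset D'); split; first by move=> w wD; apply: set_mem; exact: D'A.
move=> u /cov [w wD bw]; exists w => //.
by move: bw; rewrite -ball_normE.
Qed.

Lemma lebesgue : exists2 rho, 0 < rho & forall u a b : 'rV[R]_k.+1,
  sphere u -> sphere a -> sphere b -> `|u - a| <= rho -> `|u - b| <= rho ->
  geod (G a) (G b) <= e.
Proof.
have H : forall x : 'rV[R]_k.+1, exists r : R, sphere x -> 0 < r /\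
  forall a b, sphere a -> sphere b -> `|x - a| < r -> `|x - b| < r ->
  geod (G a) (G b) <= e.
  move=> x; have [Sx|nSx] := pselect (sphere x); last by exists 1.
  by have [r r0 Hr] := HGloc x Sx; exists r.
have [rf Hrf] := choice H.
have [N1 [N1S N1c]] := @cover_fin (@sphere R k.+1) (fun x => rf x / 2) (@sphere_compact R k.+1)
  (fun x Sx => divr_gt0 (proj1 (Hrf x Sx)) (ltr0Sn _ _)).
have [rho rho0 Hrho] := @pos_min R _ N1 (fun x => rf x / 2)
  (fun x xN => divr_gt0 (proj1 (Hrf x (N1S x xN))) (ltr0Sn _ _)).
exists rho => // u a b Su Sa Sb ua ub.
have [w wN wu] := N1c u Su.
have [_ Hw] := Hrf w (N1S w wN).
have rw := Hrho w wN.
apply: Hw => //.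
- have -> : w - a = (w - u) + (u - a) by rewrite addrA subrK.
  apply: le_lt_trans (ler_normD _ _) _.
  rewrite (splitr (rf w)); apply: ltr_leD => //; exact: le_trans ua rw.
- have -> : w - b = (w - u) + (u - b) by rewrite addrA subrK.
  apply: le_lt_trans (ler_normD _ _) _.
  rewrite (splitr (rf w)); apply: ltr_leD => //; exact: le_trans ub rw.
Qed.

End Main.
Section Constr.
Local Open Scope classical_set_scope.
Local Open Scope ring_scope.
Variables (R : realType) (n k : nat) (e : R).
Variable G : 'rV[R]_k.+1 -> 'rV[R]_n.+1.
Hypothesis HGs : forall u, sphere u -> sphere (G u).
Hypothesis HGodd : forall u, sphere u -> G (- u) = - G u.
Variable rho : R.
Hypothesis rho0 : 0 < rho.
Hypothesis Hleb : forall u a b : 'rV[R]_k.+1,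
  sphere u -> sphere a -> sphere b -> `|u - a| <= rho -> `|u - b| <= rho ->
  geod (G a) (G b) <= e.
Variable N : seq 'rV[R]_k.+1.
Hypothesis NS : forall w, w \in N -> sphere w.
Hypothesis Ncov : forall u, sphere u -> exists2 w, w \in N & `|w - u| < rho.

Let W := N ++ map -%R N.
Let phi (w u : 'rV[R]_k.+1) := Num.max 0 (rho - `|u - w|).
Let Sig u := \sum_(w <- W) phi w u.
Let num u v := \sum_(w <- W | G w == v) phi w u.
Let gg u v := num u v / Sig u.

Lemma WS w : w \in W -> sphere w.
Proof.
rewrite mem_cat => /orP[/NS //|/mapP[x xN ->]]; exact/sphereN/NS.
Qed.

Lemma Wperm : perm_eq (map -%R W) W.
Proof. by rewrite /W map_cat (mapK opprK) perm_catC. Qed.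

Lemma phi_ge0 w u : 0 <= phi w u.
Proof. by rewrite /phi le_max lexx. Qed.

Lemma phi_neq0 w u : phi w u != 0 -> `|u - w| < rho.
Proof.
rewrite /phi; case: (ltP (`|u - w|) rho) => // h.
by rewrite max_l ?eqxx // subr_le0.
Qed.

Lemma phiN w u : phi w (- u) = phi (- w) u.
Proof. by rewrite /phi -opprD normrN opprK. Qed.

Lemma Sig_ge0 u : 0 <= Sig u.
Proof. by apply: sumr_ge0 => w _; exact: phi_ge0. Qed.

Lemma Sig_gt0 u : sphere u -> 0 < Sig u.
Proof.
move=> Su; have [w wN wu] := Ncov u Su.
have wW : w \in W by rewrite mem_cat wN.
rewrite /Sig (big_rem w wW) /=.
have h1 : 0 < phi w u by rewrite /phi lt_max distrC subr_gt0 wu orbT.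
have h2 : 0 <= \sum_(y <- rem w W) phi y u by apply: sumr_ge0 => x _; exact: phi_ge0.
lra.
Qed.

Lemma SigN u : Sig (- u) = Sig u.
Proof.
rewrite /Sig; under eq_bigr do rewrite phiN.
by rewrite -(big_map -%R predT (fun w => phi w u)); apply: perm_big; exact: Wperm.
Qed.

Lemma numN u v : num (- u) v = num u (- v).
Proof.
rewrite /num; under eq_bigr do rewrite phiN.
have -> : \sum_(i <- W | G i == v) phi (- i) u =
  \sum_(i <- map -%R W | G (- i) == v) phi i u.
  by rewrite big_map; apply: eq_bigl => i; rewrite opprK.
rewrite (perm_big _ Wperm) /=.
rewrite big_seq_cond [RHS]big_seq_cond; apply: eq_bigl => w.
case wW: (w \in W) => //=.
rewrite HGodd; last exact: WS. apply/eqP/eqP => [<-|->]; by rewrite opprK.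
Qed.

Lemma ggN u : gg (- u) = (fun v => gg u (- v)).
Proof. by apply: funext => v; rewrite /gg numN SigN. Qed.

Lemma gg_ge0 u v : 0 <= gg u v.
Proof.
by apply: divr_ge0; [apply: sumr_ge0 => w _; exact: phi_ge0 | exact: Sig_ge0].
Qed.

Lemma gg_out u v : (forall w, w \in W -> phi w u != 0 -> G w != v) -> gg u v = 0.
Proof.
move=> H; rewrite /gg /num big_seq_cond big1 ?mul0r // => w /andP[wW /eqP Gw].
by apply/eqP/negPn/negP => /(H w wW); rewrite Gw eqxx.
Qed.

Lemma sum_gg u (s : seq 'rV[R]_n.+1) : uniq s -> Sig u != 0 ->
  (forall w, w \in W -> phi w u != 0 -> G w \in s) -> \sum_(v <- s) gg u v = 1.
Proof.
move=> us Su H; rewrite /gg -mulr_suml /num.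
under eq_bigr do rewrite big_mkcond /=.
rewrite exchange_big /=.
suff -> : \sum_(w <- W) \sum_(v <- s) (if G w == v then phi w u else 0) = Sig u.
  by rewrite divff.
rewrite /Sig big_seq [RHS]big_seq; apply: eq_bigr => w wW.
have [->|nz] := eqVneq (phi w u) 0.
  by apply: big1 => v _; case: ifP.
rewrite (bigD1_seq (G w)) ?H //= eqxx big1 ?addr0 // => v vG.
by rewrite eq_sym (negbTE vG).
Qed.


Let supp u := undup [seq G w | w <- W & `|u - w| <= rho].

Lemma supp_in u w : w \in W -> `|u - w| <= rho -> G w \in supp u.
Proof.
move=> wW uw; rewrite mem_undup; apply/mapP; exists w => //.
by rewrite mem_filter uw wW.
Qed.

Lemma supp_out u v : v \in supp u ->
  exists2 w, w \in W & `|u - w| <= rho /\ v = G w.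
Proof.
rewrite mem_undup => /mapP[w]; rewrite mem_filter => /andP[uw wW] ->.
by exists w.
Qed.

Lemma supp_simplex u : sphere u -> @vr_simplex R n e (supp u).
Proof.
move=> Su; split; first exact: undup_uniq.
split.
  by move=> v /supp_out[w wW [_ ->]]; apply: HGs; exact: WS.
move=> v v' /supp_out[w wW [uw ->]] /supp_out[w' wW' [uw' ->]].
exact: (Hleb u w w' Su (WS w wW) (WS w' wW') uw uw').
Qed.

Lemma supp_phi u u' w : w \in W -> phi w u' != 0 -> `|u - w| <= rho -> G w \in supp u.
Proof. by move=> wW _ uw; exact: supp_in. Qed.

Lemma gg_point u : sphere u -> @vr_point R n e (gg u).
Proof.
move=> Su; exists (supp u); split; first exact: supp_simplex.
split.
  move=> v vn; apply: gg_out => w wW /phi_neq0 uw.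
  by apply: contraNneq vn => <-; apply: supp_in => //; exact: ltW.
split; first by move=> v; exact: gg_ge0.
apply: sum_gg; first exact: undup_uniq.
  by rewrite gt_eqF // Sig_gt0.
by move=> w wW /phi_neq0 uw; apply: supp_in => //; exact: ltW.
Qed.

Lemma phi_cont w u : (fun x => phi w x) @ u --> phi w u.
Proof.
have E : forall r : R, Num.max 0 r = (r + `|r|) / 2.
  by move=> r; rewrite maxr_absE add0r sub0r normrN.
rewrite /phi; under eq_fun do rewrite E; rewrite E.
have h : (fun x => rho - `|x - w|) @ u --> rho - `|u - w|.
  apply: (@cvgB _ _ _ (nbhs u) _); first exact: cvg_cst.
  apply: (@cvg_norm _ _ _ (nbhs u) _).
  by apply: (@cvgB _ _ _ (nbhs u) _); [exact: cvg_id | exact: cvg_cst].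
apply: (@cvgM _ _ (nbhs u) _); last exact: cvg_cst.
apply: (@cvgD _ _ _ (nbhs u) _) => //; exact: (@cvg_norm _ _ _ (nbhs u) _).
Qed.

Lemma Sig_cont u : Sig @ u --> Sig u.
Proof. by apply: (@cvg_sumseq R _ (nbhs u)) => w _; exact: phi_cont. Qed.

Lemma gg_cont u v : sphere u -> (fun x => gg x v) @ u --> gg u v.
Proof.
move=> Su; apply: (@cvgM _ _ (nbhs u) _).
  by apply: (@cvg_sumseq R _ (nbhs u)) => w _; exact: phi_cont.
by apply: (@cvgV _ _ (nbhs u) _); [rewrite gt_eqF // Sig_gt0 | exact: Sig_cont].
Qed.

Lemma bary_eq (s : seq 'rV[R]_n.+1) u' : uniq s ->
  (forall w, w \in W -> phi w u' != 0 -> G w \in s) ->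
  @bary R n s (\row_(i < size s) gg u' (nth 0 s i)) = gg u'.
Proof.
move=> us H; apply: funext => v; rewrite /bary.
under eq_bigr do rewrite mxE.
transitivity (\sum_(x <- s | x == v) gg u' x).
  by rewrite (big_nth 0) big_mkord.
have [vs|vn] := boolP (v \in s).
  rewrite big_mkcond (bigD1_seq v) //= eqxx big1 ?addr0 // => x xv.
  by rewrite (negbTE xv).
rewrite big_seq_cond big1; last first.
  by move=> x /andP[xs /eqP xv]; move: vn; rewrite -xv xs.
apply/esym/gg_out => w wW /(H w wW) Gs.
by apply: contraNneq vn => <-.
Qed.

Lemma std_gg (s : seq 'rV[R]_n.+1) u' : uniq s -> Sig u' != 0 ->
  (forall w, w \in W -> phi w u' != 0 -> G w \in s) ->
  std_simplex (\row_(i < size s) gg u' (nth 0 s i)).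
Proof.
move=> us S0 H; split; first by move=> i; rewrite mxE; exact: gg_ge0.
under eq_bigr do rewrite mxE.
transitivity (\sum_(x <- s) gg u' x); first by rewrite (big_nth 0) big_mkord.
exact: sum_gg.
Qed.

Lemma near_supp u : \forall u' \near u,
  forall w, w \in W -> phi w u' != 0 -> G w \in supp u.
Proof.
apply: (@near_seq _ _ (nbhs u)) => w wW.
have [uw|uw] := leP (`|u - w|) rho.
  by apply: nearW => u' _; exact: supp_in.
apply/nbhs_ballP; exists (`|u - w| - rho); first by rewrite /= subr_gt0.
rewrite -ball_normE.
move=> u' /= uu' /phi_neq0 u'w.
have : `|u - w| <= `|u - u'| + `|u' - w|.
  have -> : u - w = (u - u') + (u' - w) by rewrite addrA subrK.
  exact: ler_normD.
lra.
Qed.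

Lemma near_Sig u : sphere u -> \forall u' \near u, Sig u' != 0.
Proof.
move=> Su; have H := cvgr_gt _ (Sig_cont u) _ (Sig_gt0 u Su).
near=> x; have : 0 < Sig x by near: x; exact: H.
by move/gt_eqF ->.
Unshelve. all: by end_near.
Qed.

Lemma t_cont u (s : seq 'rV[R]_n.+1) (P : set 'rV[R]_(size s)) : sphere u ->
  nbhs (\row_(i < size s) gg u (nth 0 s i)) P ->
  \forall u' \near u, P (\row_(i < size s) gg u' (nth 0 s i)).
Proof.
move=> Su /nbhs_normP [eps eps0 Heps].
have H : \forall u' \near u, forall i : 'I_(size s),
    ball (gg u (nth 0 s i)) eps (gg u' (nth 0 s i)).
  apply: (@filter_forall _ _ _ (nbhs u) _) => i.
  exact: (gg_cont u (nth 0 s i) Su) _ (nbhsx_ballx _ _ eps0).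
near=> u'; apply: Heps.
have Hu' : forall i : 'I_(size s), ball (gg u (nth 0 s i)) eps (gg u' (nth 0 s i)).
  by near: u'.
rewrite -mx_norm_ball; split => // i j; rewrite !mxE.
exact: Hu'.
Unshelve. all: by end_near.
Qed.

Lemma gg_open (Wo : set ('rV[R]_n.+1 -> R)) : @vr_open R n e Wo ->
  forall u, sphere u -> Wo (gg u) ->
  \forall u' \near u, sphere u' -> Wo (gg u').
Proof.
move=> [_ Wop] u Su Wgu.
have us : uniq (supp u) by exact: undup_uniq.
have Hu : forall w, w \in W -> phi w u != 0 -> G w \in supp u.
  by move=> w wW /phi_neq0 uw; apply: supp_in => //; exact: ltW.
have S0 : Sig u != 0 by rewrite gt_eqF // Sig_gt0.
have := Wop (supp u) (supp_simplex u Su) _ (std_gg (supp u) u us S0 Hu).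
rewrite bary_eq // => /(_ Wgu) Hn.
have Ht := t_cont u (supp u) _ Su Hn.
near=> u' => _.
have h1 : forall w, w \in W -> phi w u' != 0 -> G w \in supp u.
  by near: u'; exact: near_supp.
have h2 : Sig u' != 0 by near: u'; exact: near_Sig.
have h3 : std_simplex (\row_(i < size (supp u)) gg u' (nth 0 (supp u) i)) ->
    Wo (@bary R n (supp u) (\row_(i < size (supp u)) gg u' (nth 0 (supp u) i))) by near: u'.
rewrite -(bary_eq (supp u) u' us h1); apply: h3; exact: std_gg.
Unshelve. all: by end_near.
Qed.

Lemma constr : exists g, @vr_equiv_map R n k e g.
Proof.
exists gg; split; first by move=> u Su; exact: gg_point u Su.
split; first by move=> Wo Wop u Su; exact: gg_open Wo Wop u Su.
by move=> u _; exact: ggN.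
Qed.

End Constr.
Section Final.
Local Open Scope classical_set_scope.
Local Open Scope ring_scope.

Lemma main_exists (R : realType) (n k : nat) (e : R) (G : 'rV[R]_k.+1 -> 'rV[R]_n.+1) :
  (forall u, sphere u -> sphere (G u)) ->
  (forall u, sphere u -> G (- u) = - G u) ->
  (forall x : 'rV[R]_k.+1, sphere x -> exists2 r, 0 < r &
    forall a b, sphere a -> sphere b -> `|x - a| < r -> `|x - b| < r ->
    geod (G a) (G b) <= e) ->
  exists g, @vr_equiv_map R n k e g.
Proof.
move=> HGs HGodd HGloc.
have [rho rho0 Hleb] := @lebesgue R n k e G HGloc.
have [N [NS Ncov]] := @cover_fin R k (@sphere R k.+1) (fun _ => rho)
  (@sphere_compact R k.+1) (fun _ _ => rho0).
exact: (@constr R n k e G HGs HGodd rho Hleb N NS Ncov).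
Qed.

Lemma dotp_eq0 (R : realType) m (x : 'rV[R]_m) : dotp x x = 0 -> x = 0.
Proof.
move=> H0.
have H := psumr_eq0P (fun j _ => (ltac:(by rewrite -expr2 sqr_ge0) : 0 <= x 0 j * x 0 j)) H0.
apply/rowP => i; rewrite mxE.
by have /eqP := H i isT; rewrite mulf_eq0 orbb => /eqP.
Qed.

Lemma dotpZ (R : realType) m (c : R) (x : 'rV[R]_m) :
  dotp (c *: x) (c *: x) = c ^+ 2 * dotp x x.
Proof.
rewrite /dotp mulr_sumr; apply: eq_bigr => i _; rewrite !mxE; ring.
Qed.

Lemma Phi_sphere (R : realType) (X : topologicalType) d (f : X -> 'rV[R]_d)
  (p : X * X) : injective f -> p.1 <> p.2 -> sphere (Phi f p).
Proof.
move=> finj np; rewrite /sphere /= /Phi dotpZ /enorm.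
set x := f p.1 - f p.2.
have q0 : 0 < dotp x x.
  rewrite lt_neqAle dotp_ge0 andbT eq_sym; apply/eqP => /dotp_eq0 /eqP.
  by rewrite subr_eq0 => /eqP /finj.
by rewrite exprVn sqr_sqrtr ?mulVf // ?gt_eqF // ltW.
Qed.

Lemma Phi_swap (R : realType) (X : topologicalType) d (f : X -> 'rV[R]_d)
  (p : X * X) : Phi f (p.2, p.1) = - Phi f p.
Proof.
rewrite /Phi /= -opprB /enorm dotpN; by rewrite scalerN.
Qed.

End Final.

Theorem theorem3p5 (R : realType) (X : topologicalType) (d k : nat) :
  (1 <= d)%N -> coind_conf_eq R X k -> (d.-1 <= k)%N ->
  forall f : X -> 'rV[R]_d, injective f ->
  (c_nk R d.-1 k <= alpha f)%E.
Proof.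
move=> d1 [[h [hc [hconf hodd]]] _] _ f finj.
case: d d1 f finj => // d' _ f finj /=.
rewrite /alpha /delta_of.
apply: le_ereal_inf_tmp => _ [e [e0 He] <-].
apply: ereal_inf_lbound; exists e => //; split => //.
apply: (@main_exists R d' k e (fun u => Phi f (h u))).
- by move=> u Su; apply: Phi_sphere => //; exact: hconf.
- by move=> u Su; rewrite hodd // Phi_swap.
move=> x Sx.
have [V [Vo [Vx HV]]] := He (h x) (hconf x Sx).
have Hn : nbhs (x : subspace (@sphere R k.+1)) (from_subspace (@sphere R k.+1) h @^-1` V)%classic.
  by apply: hc; apply: open_nbhs_nbhs; split.
have : within (@sphere R k.+1) (nbhs x) (h @^-1` V)%classic by rewrite nbhs_subspace_in.
move=> /nbhs_ballP [r r0 Hr]; exists r => // a b Sa Sb xa xb.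
apply: HV; try exact: hconf.
  by apply: (Hr a) => //; rewrite -ball_normE.
by apply: (Hr b) => //; rewrite -ball_normE.
Qed.
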